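(* Let $n\ge 2$ and let $\overrightarrow{K_{1,n}}$ be an orientation of the star $K_{1,n}$. Then $\overrightarrow{K_{1,n}}$ is $\{1,2\}$-antimagic if and only if $n=2$ and its center is neither a source nor a sink.
   Context: An oriented graph $\overrightarrow{G}$ is a directed graph obtained from a simple undirected graph by giving each edge one direction. For vertices $u,v$, $d(u,v)$ is the length of a shortest directed path from $u$ to $v$ ($d(u,u)=0$, and $d(u,v)=\infty$ if there is no such path). Let $\partial=\max\{d(u,v)<\infty : u,v\in V(\overrightarrow{G})\}$. A distance set is a nonempty $D\subseteq\{0,1,\dots,\partial\}$. The $D$-neighborhood of $u$ is $N_D(u)=\{v : d(u,v)\in D\}$. For a bijection $f:V(\overrightarrow{G})\to\{1,\dots,|V(\overrightarrow{G})|\}$, the $D$-weight of $u$ is $\omega_D(u)=\sum_{v\in N_D(u)} f(v)$ (empty sum $=0$). $\overrightarrow{G}$ is $D$-antimagic if $D\subseteq\{0,\dots,\partial\}$ (so $\{1,2\}$-antimagic requires $\partial\ge 2$) and there is such a bijection $f$ with all $D$-weights pairwise distinct. The center of $\overrightarrow{K_{1,n}}$ is its vertex of degree $n$; a source is a vertex of in-degree $0$ and a sink a vertex of out-degree $0$. *)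

(* Defs.v *)
From mathcomp Require Import all_boot all_order.
Set Implicit Arguments. Unset Strict Implicit. Unset Printing Implicit Defensive.

Section Oriented.
Variable V : finType.
Variable arc : rel V.

Definition oriented : Prop :=
  (forall u, ~~ arc u u) /\ (forall u v, ~~ (arc u v && arc v u)).

Fixpoint walkn (k : nat) (u v : V) : bool :=
  if k is k'.+1 then [exists w, arc u w && walkn k' w v] else u == v.

Definition dist_eq (u v : V) (k : nat) : bool :=
  walkn k u v && [forall j : 'I_k, ~~ walkn j u v].

Definition diam_ge (m : nat) : Prop :=
  exists u v k, (m <= k) && dist_eq u v k.

(* v \in N_D(u) ; finite distances are always < #|V| *)
Definition inND (D : pred nat) (u v : V) : bool :=
  [exists k : 'I_#|V|, D k && dist_eq u v k].

Definition Dweight (D : pred nat) (f : V -> nat) (u : V) : nat :=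
  \sum_(v | inND D u v) f v.

Definition labeling (f : V -> nat) : Prop :=
  injective f /\ (forall v, 1 <= f v <= #|V|).

Definition D_antimagic (D : pred nat) : Prop :=
  (exists k, D k) /\ (forall k, D k -> diam_ge k) /\
  exists f, labeling f /\ injective (Dweight D f).

Definition source (c : V) : Prop := forall v, ~~ arc v c.
Definition sink (c : V) : Prop := forall v, ~~ arc c v.
End Oriented.

(* arc is an orientation of the star K_{1,n} on 'I_n.+1 with center ord0 *)
Definition star_orientation (n : nat) (arc : rel 'I_n.+1) : Prop :=
  oriented arc /\
  forall u v : 'I_n.+1,
    (arc u v || arc v u) = (u != v) && ((u == ord0) || (v == ord0)).

(* Main.v *)
Require Import Defs.
From mathcomp Require Import all_boot all_order.
From mathcomp Require Import zify.

Section Gen.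
Variable V : finType.
Variable arc : rel V.

Lemma walk_in k u v : walkn arc k.+1 u v -> exists w, arc w v.
Proof.
elim: k u => [|k IH] u /=.
  by case/existsP=> w /andP[h /eqP <-]; exists u.
by case/existsP=> w /andP[_ h]; apply: (IH w).
Qed.

Lemma sink_weight (D : pred nat) f u : ~~ D 0 -> (forall x, ~~ arc u x) ->
  Dweight arc D f u = 0.
Proof.
move=> D0 hu; apply: big1 => x /existsP[[[|k] hk]] /= /andP[Dk /andP[hw _]].
  by rewrite Dk in D0.
by move: hw => /= /existsP[y /andP[h _]]; move: (hu y); rewrite h.
Qed.

Lemma walk_eq u u' x j : (forall y, arc u y = arc u' y) -> (u == x) = (u' == x) ->
  walkn arc j u x = walkn arc j u' x.
Proof.
move=> h e; case: j => [|j] //=.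
by apply: eq_existsb => y; rewrite h.
Qed.

Lemma same_weight (D : pred nat) f u u' : ~~ D 0 -> source arc u -> source arc u' ->
  (forall y, arc u y = arc u' y) -> Dweight arc D f u = Dweight arc D f u'.
Proof.
move=> D0 su su' h; apply: eq_bigl => x.
have [sx|nsx] := boolP [forall y, ~~ arc y x].
  have nd : forall w, ~~ inND arc D w x.
    move=> w; apply/existsP => -[[[|k] hk]] /= /andP[Dk /andP[hw _]].
      by rewrite Dk in D0.
    have [z hz] := @walk_in k w x hw.
    by move/forallP: sx => /(_ z); rewrite hz.
  by rewrite (negbTE (nd u)) (negbTE (nd u')).
have [z hz] : exists z, arc z x.
  by move/forallPn: nsx => [z]; rewrite negbK; exists z.
have xu : (u == x) = false by apply/eqP => ex; move: (su z); rewrite ex hz.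
have xu' : (u' == x) = false by apply/eqP => ex; move: (su' z); rewrite ex hz.
have e : (u == x) = (u' == x) by rewrite xu xu'.
apply: eq_existsb => k; rewrite /dist_eq (@walk_eq u u' x k h e).
congr (_ && (_ && _)); apply: eq_forallb => j; by rewrite (@walk_eq u u' x j h e).
Qed.
End Gen.
Section Main.
Variable n : nat.
Variable arc : rel 'I_n.+1.
Hypothesis Hs : star_orientation arc.
Let D := fun k => (k == 1) || (k == 2).

Lemma leaf_out {i y : 'I_n.+1} : i != ord0 -> arc i y -> y = ord0.
Proof.
case: Hs => _ H hi a; move: (H i y); rewrite a /= (negbTE hi) /=.
by move/esym/andP=> [_ /eqP].
Qed.

Lemma leaf_in {i y : 'I_n.+1} : i != ord0 -> arc y i -> y = ord0.
Proof.
case: Hs => _ H hi a; move: (H y i); rewrite a /= (negbTE hi) orbF.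
by move/esym/andP=> [_ /eqP].
Qed.

Lemma leaf_adj (i : 'I_n.+1) : i != ord0 -> arc i ord0 = ~~ arc ord0 i.
Proof.
case: Hs => [[_ Ha] H] hi; move: (H i ord0) (Ha i ord0).
rewrite hi eqxx orbT /=.
by case: (arc i ord0); case: (arc ord0 i).
Qed.

Lemma key f (i j : 'I_n.+1) : injective (Dweight arc D f) ->
  i != ord0 -> j != ord0 -> i != j -> arc ord0 i = ~~ arc ord0 j.
Proof.
move=> hinj hi hj hij.
case ei: (arc ord0 i); case ej: (arc ord0 j) => //=.
- have si : forall x, ~~ arc i x.
    move=> x; apply/negP => a; have e := leaf_out hi a; subst x.
    by rewrite leaf_adj // ei in a.
  have sj : forall x, ~~ arc j x.
    move=> x; apply/negP => a; have e := leaf_out hj a; subst x.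
    by rewrite leaf_adj // ej in a.
  have : Dweight arc D f i = Dweight arc D f j.
    by rewrite !sink_weight.
  by move/hinj/eqP; rewrite (negbTE hij).
- have ai : arc i ord0 by rewrite leaf_adj // ei.
  have aj : arc j ord0 by rewrite leaf_adj // ej.
  have soi : source arc i.
    by move=> y; apply/negP => a; have e := leaf_in hi a; subst y; rewrite ei in a.
  have soj : source arc j.
    by move=> y; apply/negP => a; have e := leaf_in hj a; subst y; rewrite ej in a.
  have : Dweight arc D f i = Dweight arc D f j.
    apply: same_weight => // y.
    case: (eqVneq y ord0) => [->|hy]; first by rewrite ai aj.
    apply/idP/idP => a; [by have := leaf_out hi a; move/eqP; rewrite (negbTE hy)|].
    by have := leaf_out hj a; move/eqP; rewrite (negbTE hy).
  by move/hinj/eqP; rewrite (negbTE hij).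
Qed.
End Main.

Theorem mainTheorem5 (n : nat) (arc : rel 'I_n.+1) :
  2 <= n -> star_orientation arc ->
  (D_antimagic arc (fun k => (k == 1) || (k == 2)) <->
   n = 2 /\ ~ source arc ord0 /\ ~ sink arc ord0).
Proof.
move=> hn Hs; split.
  case=> _ [_ [f [_ hinj]]].
  have l1 : 1 < n.+1 by lia.
  have l2 : 2 < n.+1 by lia.
  pose i1 := Ordinal l1; pose i2 := Ordinal l2.
  have k12 := @key n arc Hs f _ _ hinj (isT : i1 != ord0) (isT : i2 != ord0) isT.
  have n2 : n = 2.
    case: (ltnP 2 n) => h; last by lia.
    have l3 : 3 < n.+1 by lia.
    pose i3 := Ordinal l3.
    have k13 := @key n arc Hs f _ _ hinj (isT : i1 != ord0) (isT : i3 != ord0) isT.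
    have k23 := @key n arc Hs f _ _ hinj (isT : i2 != ord0) (isT : i3 != ord0) isT.
    move: k12 k13 k23.
    by case: (arc ord0 i1); case: (arc ord0 i2); case: (arc ord0 i3).
  split=> //.
  case e1: (arc ord0 i1).
    split; last by move/(_ i1); rewrite e1.
    move/(_ i2); rewrite (@leaf_adj n arc Hs _ (isT : i2 != ord0)).
    by move: k12; rewrite e1; case: (arc ord0 i2).
  split; last by move/(_ i2); move: k12; rewrite e1; case: (arc ord0 i2).
  by move/(_ i1); rewrite (@leaf_adj n arc Hs _ (isT : i1 != ord0)) e1.
case=> en [ns nk]; subst n.
have [v av] : exists v, arc v ord0.
  case: (boolP [exists v, arc v ord0]) => [/existsP//|/existsPn h].
  by case: ns => x; apply: h.
have [w aw] : exists w, arc ord0 w.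
  case: (boolP [exists w, arc ord0 w]) => [/existsP//|/existsPn h].
  by case: nk => x; apply: h.
case: (Hs) => [[Hl Ha] Hst].
have hv : v != ord0 by apply/eqP => e; move: (Hl v); rewrite {2}e av.
have hw : w != ord0 by apply/eqP => e; move: (Hl w); rewrite {1}e aw.
have hvw : v != w by apply/eqP => e; move: (Ha v ord0); rewrite av e aw.
have cover : forall x : 'I_3, [|| x == ord0, x == v | x == w].
  move=> x; apply/negPn/negP; rewrite !negb_or => /and3P[a b c].
  move: hv hw hvw a b c; rewrite -!val_eqE /=.
  have := ltn_ord x; have := ltn_ord v; have := ltn_ord w; lia.
have sw : forall x, ~~ arc w x.
  move=> x; apply/negP => a; have e := @leaf_out 2 arc Hs _ _ hw a; subst x.
  by move: (Ha w ord0); rewrite a aw.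
pose D := fun k => (k == 1) || (k == 2).
have c3 : #|'I_3| = 3 by rewrite card_ord.
have d1 : (1 < #|'I_3|) by rewrite c3.
have d2 : (2 < #|'I_3|) by rewrite c3.
have nd0 : forall u, ~~ inND arc D u u.
  move=> u; apply/negP => /existsP[[[|k] hk]].
    by rewrite /= /D.
  move=> /andP[Dk /andP[_ /forallP /(_ ord0)]] /=.
  by rewrite eqxx.
have in0w : inND arc D ord0 w.
  apply/existsP; exists (Ordinal d1) => /=; apply/andP; split=> //;
  first by apply/existsP; exists w; rewrite aw eqxx.
  by apply/forallP => -[[|j] hj] //=; rewrite eq_sym.
have dvw : dist_eq arc v w 2.
  apply/andP; split.
    by apply/existsP; exists ord0; rewrite av /=; apply/existsP; exists w; rewrite aw eqxx.
  apply/forallP => -[[|[|j]] hj] //=.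
  apply/existsPn => y; apply/negP => /andP[a /eqP e]; subst y.
  by move: (@leaf_out 2 arc Hs _ _ hv a) => e; rewrite e eqxx in hw.
have invw : inND arc D v w.
  by apply/existsP; exists (Ordinal d2); rewrite /= dvw.
have inv0 : inND arc D v ord0.
  apply/existsP; exists (Ordinal d1) => /=; apply/andP; split=> //;
  first by apply/existsP; exists ord0; rewrite av eqxx.
  by apply/forallP => -[[|j] hj] //=.
split; first by exists 1.
split.
  by move=> k /orP[/eqP->|/eqP->]; exists v, w, 2; rewrite dvw.
pose f := fun x : 'I_3 => 3 - x.
exists f; split.
  split.
    move=> x y /= e; apply: ord_inj; move: e; rewrite /f.
    have:=ltn_ord x; have:= ltn_ord y; lia.
  by move=> x; rewrite c3 /f; have := ltn_ord x; lia.
have Ww : Dweight arc D f w = 0 by apply: sink_weight.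
have W0lo : 1 <= Dweight arc D f ord0.
  rewrite /Dweight (bigD1 w) //= /f; have := ltn_ord w; lia.
have W0hi : Dweight arc D f ord0 <= 3.
  rewrite /Dweight big_mkcond.
  apply: (@leq_trans (\sum_(x:'I_3) (if x != ord0 then f x else 0))).
    apply: leq_sum => x _; case: (eqVneq x ord0) => [->|_].
      by rewrite (negbTE (nd0 _)).
    by case: ifP.
  by rewrite !big_ord_recl big_ord0.
have Wv : 4 <= Dweight arc D f v.
  rewrite /Dweight (bigD1 ord0) //= (bigD1 w) /=; last by rewrite invw hw.
  rewrite /f; have -> : nat_of_ord (ord0 : 'I_3) = 0 by []. have := ltn_ord w; lia.
change (injective (Dweight arc D f)); move=> x y e.
case/or3P: (cover x) => /eqP ex; case/or3P: (cover y) => /eqP ey; subst x y => //;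
  move: e; lia.
Qed.
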